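(* Let $\eta>0$, $\beta\in[0,1)$ and $\lambda_i$ with $\eta\lambda_i>0$, and let ${\mathcal{M}}_i:\mathbb{S}^2\to\mathbb{S}^2$, ${\mathcal{M}}_i({\bm{X}}):={\bm{A}}_i{\bm{X}}{\bm{A}}_i^\top+\eta^2\lambda_i^2({\bm{X}})_{11}{\bm{Q}}$, where ${\bm{A}}_i=\begin{bmatrix}1-\eta\lambda_i&-\beta\\ \eta\lambda_i&\beta\end{bmatrix}$ and ${\bm{Q}}=\begin{bmatrix}1&-1\\-1&1\end{bmatrix}$. For any $c>0$, if $\rho(c{\mathcal{M}}_i)\ge1$, then for every $\alpha>0$ there is no ${\bm{W}}\succeq0$ (${\bm{W}}\in\mathbb{S}^2$) with $(\mathrm{Id}-c{\mathcal{M}}_i)({\bm{W}})\succeq\alpha{\bm{Q}}$.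
   Context: $\mathbb{S}^2$ denotes the space of real symmetric $2\times2$ matrices; $\succeq$ is the Loewner order; $\rho(\cdot)$ denotes spectral radius and $\mathrm{Id}$ the identity map. *)

(* Defs.v *)
From HB Require Import structures.
From mathcomp Require Import all_boot all_order all_algebra.
From mathcomp Require Import complex.
Import ComplexField ComplexField.Normc.
Set Implicit Arguments. Unset Strict Implicit. Unset Printing Implicit Defensive.
Import Order.TTheory GRing.Theory Num.Theory.
Local Open Scope ring_scope.

Section Defs.
Variable R : rcfType.

Definition mx2 (a b c d : R) : 'M[R]_2 :=
  \matrix_(i < 2, j < 2)
    if (i : nat) == 0%N then (if (j : nat) == 0%N then a else b)
    else (if (j : nat) == 0%N then c else d).

Definition psd (X : 'M[R]_2) : Prop :=
  X^T = X /\ forall v : 'cV[R]_2, 0 <= (v^T *m X *m v) 0 0.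

Definition loewner_ge (X Y : 'M[R]_2) : Prop := psd (X - Y).

(* coordinates of a symmetric 2x2 matrix in the basis E11, E12+E21, E22 of S^2 *)
Definition vecS (X : 'M[R]_2) : 'cV[R]_3 :=
  \col_(k < 3)
    if (k : nat) == 0%N then X 0 0 else if (k : nat) == 1%N then X 0 1 else X 1 1.
Definition matS (v : 'cV[R]_3) : 'M[R]_2 :=
  \matrix_(i < 2, j < 2) v (inord (i + j)) 0.

Definition opmx (f : 'M[R]_2 -> 'M[R]_2) : 'M[R]_3 :=
  \matrix_(k < 3, l < 3) vecS (f (matS (delta_mx l 0))) k 0.

Definition spectral_radius n (A : 'M[R]_n) : R :=
  \big[Num.max/0]_(z <- sval (closed_field_poly_normal
                           (char_poly (map_mx (fun x : R => x%:C%C) A))))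
    normc z.

Definition op_spectral_radius (f : 'M[R]_2 -> 'M[R]_2) : R :=
  spectral_radius (opmx f).

Definition Qmx : 'M[R]_2 := mx2 1 (-1) (-1) 1.
Definition Amx (eta beta lam : R) : 'M[R]_2 :=
  mx2 (1 - eta * lam) (- beta) (eta * lam) beta.
Definition Mop (eta beta lam : R) (X : 'M[R]_2) : 'M[R]_2 :=
  Amx eta beta lam *m X *m (Amx eta beta lam)^T
  + (eta ^+ 2 * lam ^+ 2 * X 0 0) *: Qmx.

End Defs.

(* Main.v *)
Require Import Defs.
From HB Require Import structures.
From mathcomp Require Import all_boot all_order all_algebra.
From mathcomp Require Import complex.
From mathcomp Require Import ring lra.
Import Order.TTheory GRing.Theory Num.Theory.
Local Open Scope ring_scope.

Ltac pos := repeat first [ assumption | apply: sqr_ge0 | (apply: ltW; assumption) | apply: mulr_ge0 ].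

Lemma sum_cs (R : rcfType) (d T1 T2 b1 b2 g1 g2 : R) : 0 < d ->
  0 <= b1 -> 0 <= b2 -> 0 <= g1 -> 0 <= g2 ->
  d * T1 ^+ 2 <= b1 * g1 -> d * T2 ^+ 2 <= b2 * g2 ->
  d * (T1 + T2) ^+ 2 <= (b1 + b2) * (g1 + g2).
Proof.
move=> d0 hb1 hb2 hg1 hg2 h1 h2.
have hP : 0 <= b1 * g2 by pos.
have hQ : 0 <= b2 * g1 by pos.
have hm : (d * T1 * T2) ^+ 2 <= (b1 * g2) * (b2 * g1).
  have -> : (d * T1 * T2) ^+ 2 = (d * T1 ^+ 2) * (d * T2 ^+ 2) by ring.
  have -> : (b1 * g2) * (b2 * g1) = (b1 * g1) * (b2 * g2) by ring.
  apply: ler_pM => //; pos.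
have hm2 : 2 * (d * T1 * T2) <= b1 * g2 + b2 * g1.
  have hq : (2 * (d * T1 * T2)) ^+ 2 <= (b1 * g2 + b2 * g1) ^+ 2.
    have : 0 <= (b1 * g2 - b2 * g1) ^+ 2 by pos.
    nra.
  have hPQ : 0 <= b1 * g2 + b2 * g1 by lra.
  nra.
have -> : (b1 + b2) * (g1 + g2) = b1 * g1 + b2 * g2 + (b1 * g2 + b2 * g1) by ring.
have -> : d * (T1 + T2) ^+ 2 = d * T1 ^+ 2 + d * T2 ^+ 2 + 2 * (d * T1 * T2) by ring.
lra.
Qed.

Section Core.
Variable R : rcfType.
Variables a b c al w1 w2 w3 : R.
Hypothesis c0 : 0 < c.
Hypothesis al0 : 0 < al.

Definition qf (s1 s2 s3 x y : R) := s1 * x ^+ 2 + 2 * s2 * x * y + s3 * y ^+ 2.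
Definition ph1 (s1 s2 s3 : R) := c * (((1 - a) ^+ 2 + a ^+ 2) * s1 - 2 * (1 - a) * b * s2 + b ^+ 2 * s3).
Definition ph2 (s1 s2 s3 : R) := c * (((1 - a) * a - a ^+ 2) * s1 + (1 - 2 * a) * b * s2 - b ^+ 2 * s3).
Definition ph3 (s1 s2 s3 : R) := c * (2 * a ^+ 2 * s1 + 2 * a * b * s2 + b ^+ 2 * s3).

Lemma qf_ph s1 s2 s3 x y : qf (ph1 s1 s2 s3) (ph2 s1 s2 s3) (ph3 s1 s2 s3) x y =
  c * (qf s1 s2 s3 ((1 - a) * x + a * y) (b * (y - x)) + a ^+ 2 * (x - y) ^+ 2 * s1).
Proof. rewrite /qf /ph1 /ph2 /ph3; ring. Qed.

Lemma ph_psd s1 s2 s3 : (forall x y, 0 <= qf s1 s2 s3 x y) ->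
  forall x y, 0 <= qf (ph1 s1 s2 s3) (ph2 s1 s2 s3) (ph3 s1 s2 s3) x y.
Proof.
have c0' := c0; have al0' := al0.
move=> H x y; rewrite qf_ph.
have h1 : 0 <= s1 by have := H 1 0; rewrite /qf; lra.
have := H ((1 - a) * x + a * y) (b * (y - x)).
have : 0 <= a ^+ 2 * (x - y) ^+ 2 * s1 by pos.
move=> h2 h3; apply: mulr_ge0; first exact: ltW.
lra.
Qed.

Hypothesis HW : forall x y, 0 <= qf w1 w2 w3 x y.
Hypothesis HD : forall x y, al * (x - y) ^+ 2 <=
  qf w1 w2 w3 x y - qf (ph1 w1 w2 w3) (ph2 w1 w2 w3) (ph3 w1 w2 w3) x y.

Lemma W_ge x y : al * (x - y) ^+ 2 + c * (al * ((1 - a + b) * x + (a - b) * y) ^+ 2) <= qf w1 w2 w3 x y.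
Proof.
have c0' := c0; have al0' := al0.
have := HD x y; rewrite qf_ph.
have h1 : 0 <= w1 by have := HW 1 0; rewrite /qf; lra.
set g1 := (1 - a) * x + a * y; set g2 := b * (y - x).
have := HD g1 g2.
have := @ph_psd w1 w2 w3 HW g1 g2.
have h3 : 0 <= a ^+ 2 * (x - y) ^+ 2 * w1 by pos.
have -> : (1 - a + b) * x + (a - b) * y = g1 - g2 by rewrite /g1 /g2; ring.
move=> h4 h5 h6.
have : al * (g1 - g2) ^+ 2 <= qf w1 w2 w3 g1 g2 by lra.
move=> h7.
have : c * (al * (g1 - g2) ^+ 2) <= c * (qf w1 w2 w3 g1 g2 + a ^+ 2 * (x - y) ^+ 2 * w1).
  by rewrite ler_pM2l //; lra.
lra.
Qed.

Lemma w1_pos : 0 < w1.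
Proof.
have c0' := c0; have al0' := al0.
have := W_ge 1 0.
have : 0 <= c * (al * ((1 - a + b) * 1 + (a - b) * 0) ^+ 2) by pos.
have -> : qf w1 w2 w3 1 0 = w1 by rewrite /qf; ring.
have -> : al * (1 - 0) ^+ 2 = al by ring.
lra.
Qed.

Definition dW := w1 * w3 - w2 ^+ 2.

Lemma dW_pos : 0 < dW.
Proof.
have c0' := c0; have al0' := al0.
have := W_ge w2 (- w1).
have -> : qf w1 w2 w3 w2 (- w1) = w1 * dW by rewrite /qf /dW; ring.
have hw := w1_pos.
suff : 0 < al * (w2 - - w1) ^+ 2 + c * (al * ((1 - a + b) * w2 + (a - b) * - w1) ^+ 2).
  move=> h1 h2; have : 0 < w1 * dW by lra.
  by rewrite pmulr_rgt0.
have [h|h] := eqVneq (w2 + w1) 0.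
  have -> : w2 = - w1 by lra.
  have -> : (1 - a + b) * - w1 + (a - b) * - w1 = - w1 by ring.
  have : 0 < al * (- w1) ^+ 2 by apply: mulr_gt0 => //; nra.
  have : 0 <= al * (- w1 - - w1) ^+ 2 by pos.
  move=> h1 h2; have := mulr_gt0 c0 h2; lra.
have : 0 < al * (w2 - - w1) ^+ 2.
  apply: mulr_gt0 => //; rewrite opprK exprn_even_gt0 //.
have : 0 <= c * (al * ((1 - a + b) * w2 + (a - b) * - w1) ^+ 2).
  by pos.
lra.
Qed.


Definition qa (h1 h2 : R) := w3 * h1 ^+ 2 - 2 * w2 * h1 * h2 + w1 * h2 ^+ 2.

Lemma qf_ge0 x y : 0 <= qf w1 w2 w3 x y.
Proof. exact: HW. Qed.

Lemma qa_id h1 h2 : w1 * qa h1 h2 = (w1 * h2 - w2 * h1) ^+ 2 + dW * h1 ^+ 2.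
Proof. rewrite /qa /dW; ring. Qed.

Lemma qa_ge0 h1 h2 : 0 <= qa h1 h2.
Proof.
have c0' := c0; have al0' := al0.
have hw := w1_pos; have hd := dW_pos.
have := qa_id h1 h2.
have : 0 <= dW * h1 ^+ 2 by pos.
have : 0 <= (w1 * h2 - w2 * h1) ^+ 2 by pos.
nra.
Qed.

Lemma qa_eq0 h1 h2 : qa h1 h2 = 0 -> h1 = 0 /\ h2 = 0.
Proof.
have c0' := c0; have al0' := al0.
have hw := w1_pos; have hd := dW_pos.
move=> h0; have := qa_id h1 h2; rewrite h0 mulr0.
have : 0 <= dW * h1 ^+ 2 by pos.
have : 0 <= (w1 * h2 - w2 * h1) ^+ 2 by pos.
move=> e1 e2 e3.
have e4 : dW * h1 ^+ 2 = 0 by lra.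
have e5 : h1 = 0.
  by move/eqP: e4; rewrite mulf_eq0 gt_eqF //= expf_eq0 /= => /eqP.
have e6 : (w1 * h2 - w2 * h1) ^+ 2 = 0 by lra.
split => //.
move/eqP: e6; rewrite expf_eq0 /= e5 mulr0 subr0 mulf_eq0 gt_eqF //=.
by move/eqP.
Qed.

Lemma cs_w g1 g2 k1 k2 : dW * (g1 * k1 + g2 * k2) ^+ 2 <= qf w1 w2 w3 g1 g2 * qa k1 k2.
Proof.
have -> : qf w1 w2 w3 g1 g2 * qa k1 k2 = dW * (g1 * k1 + g2 * k2) ^+ 2 +
  (g1 * (- w2 * k1 + w1 * k2) - g2 * (w3 * k1 - w2 * k2)) ^+ 2.
  by rewrite /qf /qa /dW; ring.
rewrite lerDl; exact: sqr_ge0.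
Qed.


Definition sS1 (x1 x2 x3 : R) := qa x1 x2.
Definition sS2 (x1 x2 x3 : R) := w3 * x1 * x2 - w2 * (x1 * x3 + x2 * x2) + w1 * x2 * x3.
Definition sS3 (x1 x2 x3 : R) := qa x2 x3.

Lemma qf_sS x1 x2 x3 v1 v2 : qf (sS1 x1 x2 x3) (sS2 x1 x2 x3) (sS3 x1 x2 x3) v1 v2 =
  qa (x1 * v1 + x2 * v2) (x2 * v1 + x3 * v2).
Proof. rewrite /qf /sS1 /sS2 /sS3 /qa; ring. Qed.

Lemma sS_psd x1 x2 x3 v1 v2 : 0 <= qf (sS1 x1 x2 x3) (sS2 x1 x2 x3) (sS3 x1 x2 x3) v1 v2.
Proof. rewrite qf_sS; exact: qa_ge0. Qed.

Lemma schwarz x1 x2 x3 v1 v2 :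
  qa (ph1 x1 x2 x3 * v1 + ph2 x1 x2 x3 * v2) (ph2 x1 x2 x3 * v1 + ph3 x1 x2 x3 * v2)
  <= qf (ph1 (sS1 x1 x2 x3) (sS2 x1 x2 x3) (sS3 x1 x2 x3))
        (ph2 (sS1 x1 x2 x3) (sS2 x1 x2 x3) (sS3 x1 x2 x3))
        (ph3 (sS1 x1 x2 x3) (sS2 x1 x2 x3) (sS3 x1 x2 x3)) v1 v2.
Proof.
have c0' := c0; have al0' := al0.
have hw := w1_pos; have hd := dW_pos.
set h1 := ph1 x1 x2 x3 * v1 + ph2 x1 x2 x3 * v2.
set h2 := ph2 x1 x2 x3 * v1 + ph3 x1 x2 x3 * v2.
set r := qf _ _ _ v1 v2.
set s := qa h1 h2.
set y1 := w3 * h1 - w2 * h2.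
set y2 := - w2 * h1 + w1 * h2.
set g1 := (1 - a) * y1 + a * y2.
set g2 := b * (y2 - y1).
set hh1 := (1 - a) * v1 + a * v2.
set hh2 := b * (v2 - v1).
set k1 := x1 * hh1 + x2 * hh2.
set k2 := x2 * hh1 + x3 * hh2.
set g1' := a * (y1 - y2).
set k1' := x1 * (a * (v1 - v2)).
set k2' := x2 * (a * (v1 - v2)).
have e1 : s = c * ((g1 * k1 + g2 * k2) + (g1' * k1' + 0 * k2')).
  rewrite /s /qa /g1 /g2 /k1 /k2 /g1' /k1' /k2' /hh1 /hh2 /y1 /y2 /h1 /h2 /ph1 /ph2 /ph3.
  ring.
have cs1 := cs_w g1 g2 k1 k2.
have cs2 := cs_w g1' 0 k1' k2'.
have e2 : c * (qf w1 w2 w3 g1 g2 + qf w1 w2 w3 g1' 0) = qf (ph1 w1 w2 w3) (ph2 w1 w2 w3) (ph3 w1 w2 w3) y1 y2.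
  rewrite qf_ph /g1 /g2 /g1' /qf; ring.
have e3 : c * (qa k1 k2 + qa k1' k2') = r.
  rewrite /r qf_ph qf_sS /sS1 /k1 /k2 /k1' /k2' /hh1 /hh2 /qa; ring.
have e4 : qf w1 w2 w3 y1 y2 = dW * s.
  rewrite /s /y1 /y2 /qf /qa /dW; ring.
have hD := HD y1 y2.
have hr : 0 <= r by rewrite /r; apply: ph_psd => x y; exact: sS_psd.
have hs : 0 <= s by exact: qa_ge0.
have hsc := @sum_cs R _ _ _ _ _ _ _ hd (qf_ge0 g1 g2) (qf_ge0 g1' 0) (qa_ge0 k1 k2) (qa_ge0 k1' k2') cs1 cs2.
move: hsc e1 e2 e3 e4 hD.
set T := (_ + _ + _).
set B := (qf w1 w2 w3 g1 g2 + _).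
set G := (qa k1 k2 + _).
set P := qf (ph1 w1 w2 w3) _ _ y1 y2.
move=> hsc e1 e2 e3 e4 hD.
have f1 : dW * s ^+ 2 <= P * r.
  rewrite e1 -e2 -e3.
  have -> : dW * (c * T) ^+ 2 = c ^+ 2 * (dW * T ^+ 2) by ring.
  have -> : c * B * (c * G) = c ^+ 2 * (B * G) by ring.
  by apply: ler_wpM2l => //; pos.
have f2 : P * r <= dW * s * r.
  apply: ler_wpM2r => //.
  have : 0 <= al * (y1 - y2) ^+ 2 by pos.
  lra.
have f3 : s ^+ 2 <= s * r.
  have : dW * s ^+ 2 <= dW * (s * r) by rewrite mulrA; lra.
  by rewrite ler_pM2l.
nra.
Qed.


Lemma w3_pos : 0 < w3.
Proof.
have hw := w1_pos; have hd := dW_pos; move: hd; rewrite /dW => hd.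
have : 0 <= w2 ^+ 2 by pos.
nra.
Qed.

Lemma gen_eig P1 P2 P3 : (forall x y, 0 <= qf P1 P2 P3 x y) ->
  exists t x1 x2, [/\ 0 <= t, (x1 != 0) || (x2 != 0),
    (forall v1 v2, 0 <= qf (t * w1 - P1) (t * w2 - P2) (t * w3 - P3) v1 v2) &
    qf (t * w1 - P1) (t * w2 - P2) (t * w3 - P3) x1 x2 = 0].
Proof.
move=> HP.
have hw := w1_pos; have hd := dW_pos; have hw3 := w3_pos.
have hP1 : 0 <= P1 by have := HP 1 0; rewrite /qf; lra.
have hP3 : 0 <= P3 by have := HP 0 1; rewrite /qf; lra.
set m := w1 * P3 + w3 * P1 - 2 * w2 * P2.
set e := P1 * P3 - P2 ^+ 2.
set D := m ^+ 2 - 4 * dW * e.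
have i1 : (2 * dW * P1 - m * w1) ^+ 2 = w1 ^+ 2 * D - 4 * dW * (P1 * w2 - P2 * w1) ^+ 2.
  by rewrite /D /m /e /dW; ring.
have i3 : (2 * dW * P3 - m * w3) ^+ 2 = w3 ^+ 2 * D - 4 * dW * (P3 * w2 - P2 * w3) ^+ 2.
  by rewrite /D /m /e /dW; ring.
have j1 : 0 <= 4 * dW * (P1 * w2 - P2 * w1) ^+ 2 by pos; lra.
have j3 : 0 <= 4 * dW * (P3 * w2 - P2 * w3) ^+ 2 by pos; lra.
have hD : 0 <= D.
  have : 0 <= w1 ^+ 2 * D by have := sqr_ge0 (2 * dW * P1 - m * w1); lra.
  by rewrite pmulr_rge0 // exprn_gt0.
set sq := Num.sqrt D.
have hsq : 0 <= sq := sqrtr_ge0 D.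
have hsq2 : sq ^+ 2 = D := sqr_sqrtr hD.
set t := (m + sq) / (2 * dW).
have ht : 2 * dW * t = m + sq.
  rewrite /t mulrC divfK //; apply: lt0r_neq0; lra.
have hdet : (t * w1 - P1) * (t * w3 - P3) - (t * w2 - P2) ^+ 2 = 0.
  have : 4 * dW * ((t * w1 - P1) * (t * w3 - P3) - (t * w2 - P2) ^+ 2) = 0.
    have -> : 4 * dW * ((t * w1 - P1) * (t * w3 - P3) - (t * w2 - P2) ^+ 2) =
       (2 * dW * t - m) ^+ 2 - D by rewrite /D /m /e /dW; ring.
    by rewrite ht -hsq2; ring.
  have h4 : 0 < 4 * dW by lra.
  move/eqP; rewrite mulf_eq0 => /orP[|/eqP //].
  by rewrite gt_eqF.
have hz1 : 0 <= t * w1 - P1.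
  have h1 : 2 * dW * P1 - m * w1 <= w1 * sq.
    have : (2 * dW * P1 - m * w1) ^+ 2 <= (w1 * sq) ^+ 2.
      rewrite exprMn hsq2; lra.
    have : 0 <= w1 * sq by pos.
    nra.
  have : 0 <= 2 * dW * (t * w1 - P1).
    have -> : 2 * dW * (t * w1 - P1) = w1 * (2 * dW * t) - 2 * dW * P1 by ring.
    rewrite ht; lra.
  by rewrite pmulr_rge0 //; lra.
have hz3 : 0 <= t * w3 - P3.
  have h1 : 2 * dW * P3 - m * w3 <= w3 * sq.
    have : (2 * dW * P3 - m * w3) ^+ 2 <= (w3 * sq) ^+ 2.
      rewrite exprMn hsq2; lra.
    have : 0 <= w3 * sq by pos.
    nra.
  have : 0 <= 2 * dW * (t * w3 - P3).
    have -> : 2 * dW * (t * w3 - P3) = w3 * (2 * dW * t) - 2 * dW * P3 by ring.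
    rewrite ht; lra.
  by rewrite pmulr_rge0 //; lra.
have htp : 0 <= t.
  have : 0 <= t * w1 by lra.
  by rewrite pmulr_lge0.
move: hdet hz1 hz3.
set z1 := t * w1 - P1; set z2 := t * w2 - P2; set z3 := t * w3 - P3.
move=> hdet hz1 hz3.
have hpsd : forall v1 v2, 0 <= qf z1 z2 z3 v1 v2.
  move=> v1 v2.
  have [hz|hz] := eqVneq z1 0.
    have hz2 : z2 = 0.
      by move: hdet; rewrite hz mul0r sub0r => /eqP; rewrite oppr_eq0 expf_eq0 /= => /eqP.
    rewrite /qf hz hz2; have := sqr_ge0 v2; nra.
  have hz1' : 0 < z1 by rewrite lt0r hz.
  have : z1 * qf z1 z2 z3 v1 v2 = (z1 * v1 + z2 * v2) ^+ 2 + (z1 * z3 - z2 ^+ 2) * v2 ^+ 2.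
    by rewrite /qf; ring.
  rewrite hdet mul0r addr0 => e'.
  have : 0 <= z1 * qf z1 z2 z3 v1 v2 by rewrite e'; pos.
  by rewrite pmulr_rge0.
have [hz|hz] := eqVneq z1 0.
  exists t, 1, 0; split => //; first by rewrite oner_neq0.
  by rewrite -/z1 -/z2 -/z3 /qf hz; ring.
exists t, (- z2), z1; split => //; first by rewrite hz orbT.
rewrite -/z1 -/z2 -/z3.
have -> : qf z1 z2 z3 (- z2) z1 = z1 * (z1 * z3 - z2 ^+ 2) by rewrite /qf; ring.
by rewrite hdet mulr0.
Qed.


Lemma qf_lin t P1 P2 P3 x y :
  qf (ph1 (t * w1 - P1) (t * w2 - P2) (t * w3 - P3)) (ph2 (t * w1 - P1) (t * w2 - P2) (t * w3 - P3))
     (ph3 (t * w1 - P1) (t * w2 - P2) (t * w3 - P3)) x y =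
  t * qf (ph1 w1 w2 w3) (ph2 w1 w2 w3) (ph3 w1 w2 w3) x y - qf (ph1 P1 P2 P3) (ph2 P1 P2 P3) (ph3 P1 P2 P3) x y.
Proof. rewrite /qf /ph1 /ph2 /ph3; ring. Qed.

Lemma main_contra P1 P2 P3 : (forall x y, 0 <= qf P1 P2 P3 x y) ->
  (P1 != 0) || (P2 != 0) || (P3 != 0) ->
  (forall x y, qf P1 P2 P3 x y <= qf (ph1 P1 P2 P3) (ph2 P1 P2 P3) (ph3 P1 P2 P3) x y) -> False.
Proof.
move=> HP Hnz Hinc.
have c0' := c0; have al0' := al0.
have hw := w1_pos; have hd := dW_pos; have hw3 := w3_pos.
have [t [x1 [x2 [ht hx hZ hZx]]]] := @gen_eig P1 P2 P3 HP.
have hphz := @ph_psd _ _ _ hZ x1 x2.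
rewrite qf_lin in hphz.
have hq : qf (t * w1 - P1) (t * w2 - P2) (t * w3 - P3) x1 x2 = t * qf w1 w2 w3 x1 x2 - qf P1 P2 P3 x1 x2.
  by rewrite /qf; ring.
have hDx := HD x1 x2.
have hI := Hinc x1 x2.
have hta : 0 <= t * (al * (x1 - x2) ^+ 2) by pos.
have key : t * (al * (x1 - x2) ^+ 2) <= t * (qf w1 w2 w3 x1 x2 - qf (ph1 w1 w2 w3) (ph2 w1 w2 w3) (ph3 w1 w2 w3) x1 x2).
  exact: ler_wpM2l.
have e0 : t * (al * (x1 - x2) ^+ 2) = 0 by lra.
have e1 : qf (ph1 (t * w1 - P1) (t * w2 - P2) (t * w3 - P3)) (ph2 (t * w1 - P1) (t * w2 - P2) (t * w3 - P3))
     (ph3 (t * w1 - P1) (t * w2 - P2) (t * w3 - P3)) x1 x2 = 0.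
  rewrite qf_lin; lra.
have [t0|tn0] := eqVneq t 0.
  have hP0 : forall x y, qf P1 P2 P3 x y = 0.
    move=> x y; have := hZ x y; have := HP x y.
    have -> : qf (t * w1 - P1) (t * w2 - P2) (t * w3 - P3) x y = t * qf w1 w2 w3 x y - qf P1 P2 P3 x y.
      by rewrite /qf; ring.
    rewrite t0 mul0r; lra.
  have p1 : P1 = 0 by have := hP0 1 0; rewrite /qf; lra.
  have p3 : P3 = 0 by have := hP0 0 1; rewrite /qf; lra.
  have p2 : P2 = 0 by have := hP0 1 1; rewrite /qf p1 p3; lra.
  by move: Hnz; rewrite p1 p2 p3 eqxx.
have htp : 0 < t by rewrite lt0r tn0.
have ex : x2 = x1.
  move/eqP: e0; rewrite mulf_eq0 (negbTE tn0) /= mulf_eq0 gt_eqF //= expf_eq0 /= subr_eq0.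
  by move/eqP.
subst x2.
have hx1 : x1 != 0 by move: hx; rewrite orbb.
move: e1.
have -> : qf (ph1 (t * w1 - P1) (t * w2 - P2) (t * w3 - P3)) (ph2 (t * w1 - P1) (t * w2 - P2) (t * w3 - P3))
     (ph3 (t * w1 - P1) (t * w2 - P2) (t * w3 - P3)) x1 x1 = c * (x1 ^+ 2 * (t * w1 - P1)).
  by rewrite qf_ph /qf; ring.
move=> /eqP; rewrite mulf_eq0 gt_eqF //= mulf_eq0 expf_eq0 (negbTE hx1) /= => /eqP z1.
have hz3 : 0 <= t * w3 - P3 by have := hZ 0 1; rewrite /qf; lra.
have z2 : t * w2 - P2 = 0.
  have := hZ (t * w3 - P3 + 1) (- (t * w2 - P2)).
  have -> : qf (t * w1 - P1) (t * w2 - P2) (t * w3 - P3) (t * w3 - P3 + 1) (- (t * w2 - P2)) =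
    - ((t * w2 - P2) ^+ 2 * (t * w3 - P3 + 2)) by rewrite /qf z1; ring.
  rewrite oppr_ge0 pmulr_lle0; last lra.
  move=> h; have : (t * w2 - P2) ^+ 2 = 0 by have := sqr_ge0 (t * w2 - P2); lra.
  by move/eqP; rewrite expf_eq0 /= => /eqP.
have z3 : t * w3 - P3 = 0.
  move: hZx.
  have -> : qf (t * w1 - P1) (t * w2 - P2) (t * w3 - P3) x1 x1 = (t * w3 - P3) * x1 ^+ 2.
    by rewrite /qf z1 z2; ring.
  move/eqP; rewrite mulf_eq0 expf_eq0 (negbTE hx1) orbF.
  by move/eqP.
have eP1 : P1 = t * w1 by lra.
have eP2 : P2 = t * w2 by lra.
have eP3 : P3 = t * w3 by lra.
have := Hinc 1 0; have := HD 1 0.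
rewrite eP1 eP2 eP3.
have -> : qf (ph1 (t * w1) (t * w2) (t * w3)) (ph2 (t * w1) (t * w2) (t * w3)) (ph3 (t * w1) (t * w2) (t * w3)) 1 0
  = t * qf (ph1 w1 w2 w3) (ph2 w1 w2 w3) (ph3 w1 w2 w3) 1 0 by rewrite /qf /ph1 /ph2 /ph3; ring.
have -> : qf (t * w1) (t * w2) (t * w3) 1 0 = t * w1 by rewrite /qf; ring.
have -> : qf w1 w2 w3 1 0 = w1 by rewrite /qf; ring.
have -> : al * (1 - 0) ^+ 2 = al by ring.
move=> h1 h2.
have : t * al <= t * (w1 - qf (ph1 w1 w2 w3) (ph2 w1 w2 w3) (ph3 w1 w2 w3) 1 0) by rewrite ler_pM2l.
have : 0 < t * al by rewrite mulr_gt0.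
lra.
Qed.


Lemma eig_contra p1 p2 p3 q1 q2 q3 xi ze :
  ph1 p1 p2 p3 = xi * p1 - ze * q1 -> ph2 p1 p2 p3 = xi * p2 - ze * q2 -> ph3 p1 p2 p3 = xi * p3 - ze * q3 ->
  ph1 q1 q2 q3 = ze * p1 + xi * q1 -> ph2 q1 q2 q3 = ze * p2 + xi * q2 -> ph3 q1 q2 q3 = ze * p3 + xi * q3 ->
  1 <= xi ^+ 2 + ze ^+ 2 ->
  [|| p1 != 0, p2 != 0, p3 != 0, q1 != 0, q2 != 0 | q3 != 0] -> False.
Proof.
move=> e1 e2 e3 f1 f2 f3 hz hnz.
have c0' := c0; have al0' := al0.
set P1 := sS1 p1 p2 p3 + sS1 q1 q2 q3.
set P2 := sS2 p1 p2 p3 + sS2 q1 q2 q3.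
set P3 := sS3 p1 p2 p3 + sS3 q1 q2 q3.
have qP : forall v1 v2, qf P1 P2 P3 v1 v2 =
   qf (sS1 p1 p2 p3) (sS2 p1 p2 p3) (sS3 p1 p2 p3) v1 v2 + qf (sS1 q1 q2 q3) (sS2 q1 q2 q3) (sS3 q1 q2 q3) v1 v2.
  by move=> v1 v2; rewrite /P1 /P2 /P3 /qf; ring.
apply: (@main_contra P1 P2 P3).
- by move=> x y; rewrite qP; apply: addr_ge0; apply: sS_psd.
- case: (boolP ((P1 != 0) || (P2 != 0) || (P3 != 0))) => // Hz.
  move: Hz; rewrite !negb_or !negbK => /andP[/andP[/eqP h1 _] /eqP h3].
  have g1 := qa_ge0 p1 p2; have g2 := qa_ge0 q1 q2.
  have g3 := qa_ge0 p2 p3; have g4 := qa_ge0 q2 q3.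
  move: h1 h3; rewrite /P1 /P3 /sS1 /sS3 => h1 h3.
  have [a1 a2] : p1 = 0 /\ p2 = 0 by apply: qa_eq0; lra.
  have [a3 a4] : q1 = 0 /\ q2 = 0 by apply: qa_eq0; lra.
  have [_ a5] : p2 = 0 /\ p3 = 0 by apply: qa_eq0; lra.
  have [_ a6] : q2 = 0 /\ q3 = 0 by apply: qa_eq0; lra.
  by move: hnz; rewrite a1 a2 a3 a4 a5 a6 eqxx.
move=> v1 v2.
have sp := schwarz p1 p2 p3 v1 v2.
have sq := schwarz q1 q2 q3 v1 v2.
rewrite e1 e2 e3 in sp; rewrite f1 f2 f3 in sq.
have -> : qf (ph1 P1 P2 P3) (ph2 P1 P2 P3) (ph3 P1 P2 P3) v1 v2 =
  qf (ph1 (sS1 p1 p2 p3) (sS2 p1 p2 p3) (sS3 p1 p2 p3)) (ph2 (sS1 p1 p2 p3) (sS2 p1 p2 p3) (sS3 p1 p2 p3))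
     (ph3 (sS1 p1 p2 p3) (sS2 p1 p2 p3) (sS3 p1 p2 p3)) v1 v2 +
  qf (ph1 (sS1 q1 q2 q3) (sS2 q1 q2 q3) (sS3 q1 q2 q3)) (ph2 (sS1 q1 q2 q3) (sS2 q1 q2 q3) (sS3 q1 q2 q3))
     (ph3 (sS1 q1 q2 q3) (sS2 q1 q2 q3) (sS3 q1 q2 q3)) v1 v2.
  by rewrite /P1 /P2 /P3 /qf /ph1 /ph2 /ph3; ring.
have ide : qa ((xi * p1 - ze * q1) * v1 + (xi * p2 - ze * q2) * v2) ((xi * p2 - ze * q2) * v1 + (xi * p3 - ze * q3) * v2)
  + qa ((ze * p1 + xi * q1) * v1 + (ze * p2 + xi * q2) * v2) ((ze * p2 + xi * q2) * v1 + (ze * p3 + xi * q3) * v2)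
  = (xi ^+ 2 + ze ^+ 2) * qf P1 P2 P3 v1 v2.
  by rewrite qP !qf_sS /qa; ring.
have hP : 0 <= qf P1 P2 P3 v1 v2 by rewrite qP; apply: addr_ge0; apply: sS_psd.
have : qf P1 P2 P3 v1 v2 <= (xi ^+ 2 + ze ^+ 2) * qf P1 P2 P3 v1 v2.
  by rewrite ler_peMl.
lra.
Qed.

End Core.




Lemma o20 : widen_ord (leqnSn 1) (ord_max : 'I_1) = (0 : 'I_2). Proof. exact: val_inj. Qed.
Lemma o21 : (ord_max : 'I_2) = 1. Proof. exact: val_inj. Qed.

Lemma Mop_E (R : rcfType) eta beta lam (X : 'M[R]_2) i j :
  Mop eta beta lam X i j =
  let A := Amx eta beta lam in
  \sum_(k < 2) \sum_(l < 2) A i l * X l k * A j k + (eta ^+ 2 * lam ^+ 2 * X 0 0) * Qmx R i j.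
Proof.
rewrite /Mop !mxE /=.
congr (_ + _).
apply: eq_bigr => k _; rewrite !mxE big_distrl /=.
by apply: eq_bigr => l _; rewrite !mxE.
Qed.

Lemma o30 : widen_ord (leqnSn 2) (widen_ord (leqnSn 1) (ord_max : 'I_1)) = (0 : 'I_3). Proof. exact: val_inj. Qed.
Lemma o31 : widen_ord (leqnSn 2) (ord_max : 'I_2) = (1 : 'I_3). Proof. exact: val_inj. Qed.
Lemma o32 : (ord_max : 'I_3) = 2. Proof. exact: val_inj. Qed.
Ltac mx_simpl := rewrite /= !big_ord_recr !big_ord0 /= /Amx /Qmx /mx2 !mxE /= ?o20 ?o21.
Ltac mx_simpl2 := repeat progress (rewrite /= ?big_ord_recr ?big_ord0 /= ?mxE /= ?o20 ?o21 ?o30 ?o31 ?o32).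

Lemma Mop00 (R : rcfType) eta beta lam (X : 'M[R]_2) :
  Mop eta beta lam X 0 0 = ((1 - eta * lam) ^+ 2 + (eta * lam) ^+ 2) * X 0 0 - (1 - eta * lam) * beta * (X 0 1 + X 1 0) + beta ^+ 2 * X 1 1.
Proof. rewrite Mop_E; mx_simpl; ring. Qed.
Lemma Mop01 (R : rcfType) eta beta lam (X : 'M[R]_2) :
  Mop eta beta lam X 0 1 = ((1 - eta * lam) * (eta * lam) - (eta * lam) ^+ 2) * X 0 0 + (1 - eta * lam) * beta * X 0 1 - eta * lam * beta * X 1 0 - beta ^+ 2 * X 1 1.
Proof. rewrite Mop_E; mx_simpl; ring. Qed.
Lemma Mop10 (R : rcfType) eta beta lam (X : 'M[R]_2) :
  Mop eta beta lam X 1 0 = ((1 - eta * lam) * (eta * lam) - (eta * lam) ^+ 2) * X 0 0 + (1 - eta * lam) * beta * X 1 0 - eta * lam * beta * X 0 1 - beta ^+ 2 * X 1 1.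
Proof. rewrite Mop_E; mx_simpl; ring. Qed.
Lemma Mop11 (R : rcfType) eta beta lam (X : 'M[R]_2) :
  Mop eta beta lam X 1 1 = 2 * (eta * lam) ^+ 2 * X 0 0 + eta * lam * beta * (X 0 1 + X 1 0) + beta ^+ 2 * X 1 1.
Proof. rewrite Mop_E; mx_simpl; ring. Qed.


Lemma psd_qf (R : rcfType) (X : 'M[R]_2) : psd X -> forall x y,
  0 <= X 0 0 * x ^+ 2 + (X 0 1 + X 1 0) * x * y + X 1 1 * y ^+ 2.
Proof.
move=> [_ H] x y.
have := H (\col_(i < 2) (if (i : nat) == 0%N then x else y)).
mx_simpl2.
move=> h; nra.
Qed.

Lemma opmx_mul (R : rcfType) (f : 'M[R]_2 -> 'M[R]_2) (p : 'cV[R]_3) k :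
  (opmx f *m p) k 0 = \sum_(l < 3) vecS (f (matS (delta_mx l 0))) k 0 * p l 0.
Proof. rewrite !mxE; apply: eq_bigr => l _; by rewrite mxE. Qed.

Lemma matS_delta (R : rcfType) (l : 'I_3) (i j : 'I_2) : matS (delta_mx l 0) i j = ((i + j)%N == l)%:R :> R.
Proof.
rewrite !mxE andbT -val_eqE /= inordK //.
by case: i => [[|[|]]] //; case: j => [[|[|]]].
Qed.


Lemma vecS0 (R : rcfType) (X : 'M[R]_2) : vecS X 0 0 = X 0 0. Proof. by rewrite mxE. Qed.
Lemma vecS1 (R : rcfType) (X : 'M[R]_2) : vecS X 1 0 = X 0 1. Proof. by rewrite mxE. Qed.
Lemma vecS2 (R : rcfType) (X : 'M[R]_2) : vecS X 2 0 = X 1 1. Proof. by rewrite mxE. Qed.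
Lemma scE (R : rcfType) (c : R) (X : 'M[R]_2) i j : (c *: X) i j = c * X i j. Proof. by rewrite mxE. Qed.



Section OP.
Variables (R : rcfType) (c eta beta lam : R) (p : 'cV[R]_3).
Let f := fun X => c *: Mop eta beta lam X.
Lemma opmx0 : (opmx f *m p) 0 0 = c * (((1 - eta * lam) ^+ 2 + (eta * lam) ^+ 2) * p 0 0
   - 2 * (1 - eta * lam) * beta * p 1 0 + beta ^+ 2 * p 2 0).
Proof.
rewrite opmx_mul !big_ord_recr big_ord0 /= !vecS0 /f !scE !Mop00 !matS_delta /= ?o30 ?o31 ?o32.
rewrite !add0r; ring.
Qed.
Lemma opmx1 : (opmx f *m p) 1 0 = c * (((1 - eta * lam) * (eta * lam) - (eta * lam) ^+ 2) * p 0 0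
   + (1 - 2 * (eta * lam)) * beta * p 1 0 - beta ^+ 2 * p 2 0).
Proof.
rewrite opmx_mul !big_ord_recr big_ord0 /= !vecS1 /f !scE !Mop01 !matS_delta /= ?o30 ?o31 ?o32.
rewrite !add0r; ring.
Qed.
Lemma opmx2 : (opmx f *m p) 2 0 = c * (2 * (eta * lam) ^+ 2 * p 0 0
   + 2 * (eta * lam) * beta * p 1 0 + beta ^+ 2 * p 2 0).
Proof.
rewrite opmx_mul !big_ord_recr big_ord0 /= !vecS2 /f !scE !Mop11 !matS_delta /= ?o30 ?o31 ?o32.
rewrite !add0r; ring.
Qed.
End OP.

Import ComplexField ComplexField.Normc.

Lemma char_poly_tr (F : fieldType) n (A : 'M[F]_n) : char_poly A^T = char_poly A.
Proof.
rewrite /char_poly -det_tr; congr (\det _); apply/matrixP => i j.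
by rewrite /char_poly_mx !mxE eq_sym.
Qed.

Notation cRe := (@complex.Re _).
Notation cIm := (@complex.Im _).

Section C.
Variable R : rcfType.
Lemma ReM (x y : R[i]) : cRe (x * y) = cRe x * cRe y - cIm x * cIm y.
Proof. by case: x => a b; case: y => c d; simpc. Qed.
Lemma ImM (x y : R[i]) : cIm (x * y) = cRe x * cIm y + cIm x * cRe y.
Proof. by case: x => a b; case: y => c d; simpc; rewrite /= addrC. Qed.
Lemma ReD (x y : R[i]) : cRe (x + y) = cRe x + cRe y.
Proof. by case: x => a b; case: y => c d; simpc. Qed.
Lemma ImD (x y : R[i]) : cIm (x + y) = cIm x + cIm y.
Proof. by case: x => a b; case: y => c d; simpc. Qed.
Lemma ReC (r : R) : cRe (r%:C)%C = r. Proof. by []. Qed.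
Lemma ImC (r : R) : cIm (r%:C)%C = 0. Proof. by []. Qed.
Lemma Re0 : cRe (0 : R[i]) = 0. Proof. by []. Qed.
Lemma Im0 : cIm (0 : R[i]) = 0. Proof. by []. Qed.

Lemma bigmax_ge1 (s : seq R[i]) : 1 <= \big[Num.max/0]_(z <- s) normc z ->
  exists2 z, z \in s & 1 <= normc z.
Proof.
elim: s => [|x s IH]; first by rewrite big_nil ler10.
rewrite big_cons le_max => /orP[h|h].
  by exists x; rewrite ?mem_head.
by have [z zs hz] := IH h; exists z; rewrite // in_cons zs orbT.
Qed.

Lemma normc_ge1 (z : R[i]) : 1 <= normc z -> 1 <= cRe z ^+ 2 + cIm z ^+ 2.
Proof.
case: z => a b /= h.
have h0 : 0 <= a ^+ 2 + b ^+ 2 by rewrite addr_ge0 ?sqr_ge0.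
rewrite -(sqr_sqrtr h0); rewrite -[1](expr1n _ 2). 
by rewrite ler_pXn2r // ?nnegrE ?sqrtr_ge0.
Qed.
End C.

Lemma cplx_eta (R : rcfType) (x : R[i]) : x = (cRe x +i* cIm x)%C.
Proof. by case: x. Qed.

Lemma Re_row (R : rcfType) (M : 'M[R]_3) (v : 'rV[R[i]]_3) k :
  cRe ((v *m (map_mx (fun x => x%:C%C) M)^T) 0 k) = (M *m \col_l cRe (v 0 l)) k 0.
Proof.
rewrite !mxE !big_ord_recr !big_ord0 /= !mxE !ReD !ReM !ReC !ImC ?Re0.
rewrite !add0r; ring.
Qed.

Lemma Im_row (R : rcfType) (M : 'M[R]_3) (v : 'rV[R[i]]_3) k :
  cIm ((v *m (map_mx (fun x => x%:C%C) M)^T) 0 k) = (M *m \col_l cIm (v 0 l)) k 0.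
Proof.
rewrite !mxE !big_ord_recr !big_ord0 /= !mxE !ImD !ImM !ReC !ImC ?Im0.
rewrite !add0r; ring.
Qed.

Lemma entryE (R : rcfType) (A B Q : 'M[R]_2) (c al : R) i j :
  (A - c *: B - al *: Q) i j = A i j - c * B i j - al * Q i j.
Proof. by rewrite !mxE. Qed.

Lemma QE (R : rcfType) : [/\ Qmx R 0 0 = 1, Qmx R 0 1 = -1, Qmx R 1 0 = -1 & Qmx R 1 1 = 1].
Proof. by rewrite /Qmx /mx2 !mxE. Qed.

Theorem lemmaA4 (R : rcfType) (eta beta lam c : R) :
  0 < eta -> 0 <= beta -> beta < 1 -> 0 < eta * lam -> 0 < c ->
  1 <= op_spectral_radius (fun X => c *: Mop eta beta lam X) ->
  forall alpha : R, 0 < alpha ->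
  ~ (exists W : 'M[R]_2,
        W^T = W /\ psd W /\
        loewner_ge (W - c *: Mop eta beta lam W) (alpha *: Qmx R)).
Proof.
move=> heta hb0 hb1 hel hc hrho al hal [W [hWt [hWpsd hge]]].
have w10 : W 1 0 = W 0 1 by rewrite -[in LHS]hWt mxE.
have HW : forall x y, 0 <= qf R (W 0 0) (W 0 1) (W 1 1) x y.
  move=> x y; have := @psd_qf R _ hWpsd x y; rewrite w10 /qf; lra.
have HD : forall x y, al * (x - y) ^+ 2 <= qf R (W 0 0) (W 0 1) (W 1 1) x y -
    qf R (ph1 R (eta * lam) beta c (W 0 0) (W 0 1) (W 1 1)) (ph2 R (eta * lam) beta c (W 0 0) (W 0 1) (W 1 1))
      (ph3 R (eta * lam) beta c (W 0 0) (W 0 1) (W 1 1)) x y.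
  move=> x y; have := @psd_qf R _ hge x y.
  have [q1 q2 q3 q4] := QE R.
  rewrite !entryE !Mop00 !Mop01 !Mop10 !Mop11 q1 q2 q3 q4 w10.
  move=> h.
  set L := (X in 0 <= X) in h.
  have -> : qf R (W 0 0) (W 0 1) (W 1 1) x y -
    qf R (ph1 R (eta * lam) beta c (W 0 0) (W 0 1) (W 1 1)) (ph2 R (eta * lam) beta c (W 0 0) (W 0 1) (W 1 1))
      (ph3 R (eta * lam) beta c (W 0 0) (W 0 1) (W 1 1)) x y = L + al * (x - y) ^+ 2.
    rewrite /L /qf /ph1 /ph2 /ph3; ring.
  lra.
set M := opmx (fun X => c *: Mop eta beta lam X).
set MC := map_mx (fun x => x%:C%C) M.
move: hrho; rewrite /op_spectral_radius /spectral_radius -/M -/MC.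
case: (closed_field_poly_normal _) => s /= es hs.
have [z zs hz] := @bigmax_ge1 R s hs.
have hroot : root (char_poly MC) z.
  by rewrite {1}es (monicP (char_poly_monic _)) scale1r root_prod_XsubC.
have hev : eigenvalue MC^T z by rewrite eigenvalue_root_char char_poly_tr.
have [v hv vnz] := eigenvalueP hev.
set pc := \col_l cRe (v 0 l).
set qc := \col_l cIm (v 0 l).
have ER k : (M *m pc) k 0 = cRe z * cRe (v 0 k) - cIm z * cIm (v 0 k).
  rewrite -Re_row hv mxE; case: (v 0 k) => c1 d1; case: z {zs hz hroot hev hv} => a1 b1; simpc; done.
have EI k : (M *m qc) k 0 = cIm z * cRe (v 0 k) + cRe z * cIm (v 0 k).
  rewrite -Im_row hv mxE; case: (v 0 k) => c1 d1; case: z {ER zs hz hroot hev hv} => a1 b1; simpc; rewrite /=; ring.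
apply: (@eig_contra R (eta * lam) beta c al (W 0 0) (W 0 1) (W 1 1) hc hal HW HD
  (cRe (v 0 0)) (cRe (v 0 1)) (cRe (v 0 2)) (cIm (v 0 0)) (cIm (v 0 1)) (cIm (v 0 2)) (cRe z) (cIm z)).
- by rewrite -(ER 0) opmx0 !mxE /ph1; ring.
- by rewrite -(ER 1) opmx1 !mxE /ph2; ring.
- by rewrite -(ER 2) opmx2 !mxE /ph3; ring.
- by rewrite -(EI 0) opmx0 !mxE /ph1; ring.
- by rewrite -(EI 1) opmx1 !mxE /ph2; ring.
- by rewrite -(EI 2) opmx2 !mxE /ph3; ring.
- exact: normc_ge1.
case: (boolP [|| _, _, _, _, _ | _]) => // H; exfalso; move/negP: vnz; apply.
move: H; rewrite !negb_or !negbK => /andP[/eqP a0 /andP[/eqP a1 /andP[/eqP a2 /andP[/eqP b0 /andP[/eqP b1 /eqP b2]]]]].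
apply/eqP/matrixP => i j; rewrite (ord1 i) !mxE (@cplx_eta R (v 0 j)).
case: j => [[|[|[|//]]]] Hj.
- have -> : Ordinal Hj = 0 by exact: val_inj.
  by rewrite a0 b0.
- have -> : Ordinal Hj = 1 by exact: val_inj.
  by rewrite a1 b1.
- have -> : Ordinal Hj = 2 by exact: val_inj.
  by rewrite a2 b2.
Qed.
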